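(* Let $X$ be a real Banach space with the Ball Small Combination of Slice Property ($BSCSP$). Then for every separable closed subspace $Y$ of $X$ there exists a separable closed subspace $Z$ of $X$ with $Y\subseteq Z$ such that $Z$ has $BSCSP$.
   Context: For a real Banach space $X$, $B_X$ denotes its closed unit ball and $X^*$ its dual. A slice of a bounded set $C\subseteq X$ is a set $S(C,x^*,\alpha)=\{x\in C: x^*(x)>\sup x^*(C)-\alpha\}$ with $x^*\in X^*$, $\|x^*\|=1$, $\alpha>0$. A convex combination of slices of $C$ is a set $\sum_{i=1}^k \lambda_i S_i=\{\sum_{i=1}^k\lambda_i x_i : x_i\in S_i\}$ where $S_1,\dots,S_k$ are slices of $C$ and $\lambda_i>0$ with $\sum_i\lambda_i=1$. $X$ has the Ball Small Combination of Slice Property ($BSCSP$) if for every $\varepsilon>0$ there is a convex combination of slices of $B_X$ of diameter less than $\varepsilon$. *)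

(* Defs.v *)
From HB Require Import structures.
From mathcomp Require Import all_boot all_order all_algebra.
From mathcomp Require Import all_classical all_reals all_analysis.
Set Implicit Arguments. Unset Strict Implicit. Unset Printing Implicit Defensive.
Import Order.TTheory GRing.Theory Num.Theory.
Import numFieldNormedType.Exports.
Local Open Scope classical_set_scope.
Local Open Scope ring_scope.

Section BSCSP.
Variables (R : realType) (X : completeNormedModType R).

Definition is_subspace (Z : set X) : Prop :=
  Z 0 /\ forall (a : R) (x y : X), Z x -> Z y -> Z (a *: x + y).

Definition closed_subspace (Z : set X) : Prop := is_subspace Z /\ closed Z.

Definition separable_set (Z : set X) : Prop :=
  exists D : set X, [/\ countable D, D `<=` Z & Z `<=` closure D].

Definition unit_ball (Z : set X) : set X := [set x | Z x /\ `|x| <= 1].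

(* an element of the dual Z^* : a function X -> R which is linear and
   continuous on Z (its values off Z are irrelevant) *)
Definition dual_elt (Z : set X) (g : X -> R) : Prop :=
  (forall (a : R) (x y : X), Z x -> Z y -> g (a *: x + y) = a * g x + g y)
  /\ {within Z, continuous g}.

Definition dual_norm (Z : set X) (g : X -> R) : R :=
  sup [set `|g x| | x in unit_ball Z].

Definition slice (C : set X) (g : X -> R) (alpha : R) : set X :=
  [set x | C x /\ g x > sup (g @` C) - alpha].

Definition is_slice_of_ball (Z : set X) (S : set X) : Prop :=
  exists (g : X -> R) (alpha : R),
    [/\ dual_elt Z g, dual_norm Z g = 1, 0 < alpha & S = slice (unit_ball Z) g alpha].

Definition convex_comb_set (n : nat) (lam : 'I_n -> R) (S : 'I_n -> set X) : set X :=
  [set y | exists x : 'I_n -> X, (forall i, S i (x i)) /\ y = \sum_(i < n) lam i *: x i].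

Definition diam (A : set X) : \bar R :=
  ereal_sup [set (`|x - y|)%:E | x in A & y in A].

Definition BSCSP_on (Z : set X) : Prop :=
  forall eps : R, 0 < eps ->
    exists (n : nat) (lam : 'I_n -> R) (S : 'I_n -> set X),
      [/\ (forall i, 0 < lam i), \sum_(i < n) lam i = 1,
          (forall i, is_slice_of_ball Z (S i)) &
          (diam (convex_comb_set lam S) < eps%:E)%E].

Definition BSCSP : Prop := BSCSP_on setT.

End BSCSP.

(* Main.v *)
Require Import Defs.
From HB Require Import structures.
From mathcomp Require Import all_boot all_order all_algebra.
From mathcomp Require Import all_classical all_reals all_analysis.
From mathcomp Require Import ring lra.
Import Order.TTheory GRing.Theory Num.Theory.
Import numFieldNormedType.Exports.
Local Open Scope classical_set_scope.
Local Open Scope ring_scope.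
Set Implicit Arguments. Unset Strict Implicit.

Section Aux.
Variables (R : realType) (X : completeNormedModType R).

Lemma closureN (A : set X) x :
  closure A x <-> forall e : R, 0 < e -> exists2 d, A d & `|x - d| < e.
Proof.
split.
- move=> cl e e0; have [d [Ad bd]] := cl _ (nbhsx_ballx x e e0).
  by exists d => //; move: bd; rewrite -ball_normE.
- move=> H B /nbhs_ballP [e e0 sB]; have [d Ad xd] := H e e0.
  by exists d; split=> //; apply: sB; rewrite -ball_normE.
Qed.

Lemma withinT_cont (g : X -> R) : {within setT, continuous g} -> continuous g.
Proof.
move=> H x; have := H x. by rewrite /continuous_at nbhs_subspaceT.
Qed.


Lemma lin0 (Z : set X) g : dual_elt Z g -> Z 0 -> g 0 = 0.
Proof.
move=> [L _] Z0; have := L 1 0 0 Z0 Z0.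
rewrite scaler0 addr0 mul1r => /eqP; rewrite -[X in X == _]addr0 => /eqP /addrI; done.
Qed.

Lemma linZ (Z : set X) g a x : dual_elt Z g -> Z 0 -> Z x -> g (a *: x) = a * g x.
Proof.
move=> dg Z0 Zx; have := dg.1 a x 0 Zx Z0.
by rewrite addr0 (lin0 dg Z0) addr0.
Qed.

Lemma dn_has_sup (Z : set X) g : dual_norm Z g = 1 ->
  has_sup [set `|g x| | x in unit_ball Z].
Proof.
move=> h; have [//|nh] := pselect (has_sup [set `|g x| | x in unit_ball Z]).
by move: h; rewrite /dual_norm sup_out // => /eqP; rewrite eq_sym oner_eq0.
Qed.

Lemma dn_le (Z : set X) g x : dual_norm Z g = 1 -> unit_ball Z x -> `|g x| <= 1.
Proof.
move=> h Bx; rewrite -h; apply: sup_upper_bound; first exact: dn_has_sup.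
by exists x.
Qed.


Lemma restrict (g : X -> R) (al : R) : dual_elt setT g -> dual_norm setT g = 1 ->
  0 < al -> exists p : X, forall Z, is_subspace Z -> Z p ->
    exists S', is_slice_of_ball Z S' /\ S' `<=` slice (unit_ball setT) g al.
Proof.
move=> dg ng a0.
set B := unit_ball (setT : set X).
have B0 : B 0 by split => //; rewrite normr0.
have gB x : B x -> `|g x| <= 1 := dn_le ng.
have hsG : has_sup (g @` B).
  split; first by exists (g 0), 0.
  by exists 1 => _ [x Bx <-]; exact: le_trans (ler_norm _) (gB x Bx).
set s := sup (g @` B).
have h2 : (0:R) < 1/2 by [].
have [_ [x0 Bx0 <-] hx0] := sup_adherent h2 (dn_has_sup ng).
rewrite -/(dual_norm _ _) ng in hx0.
have ub := sup_upper_bound hsG.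
have s1 : g x0 <= s by apply: ub; exists x0.
have Bm : B (- x0) by split => //; rewrite normrN; exact: Bx0.2.
have s2 : g (- x0) <= s by apply: ub; exists (- x0).
have gN : g (- x0) = - g x0.
  by rewrite -scaleN1r (linZ _ dg) // mulN1r.
rewrite gN in s2.
have sge : `|g x0| <= s by rewrite ler_norml s1 andbT lerNl.
set ga := Num.min al (1/2) / 2.
have ga0 : 0 < ga by rewrite /ga divr_gt0 // lt_min a0.
have gaa : ga * 2 <= al.
  by rewrite /ga divfK ?pnatr_eq0 // ge_min lexx.
have gah : ga <= 1/4.
  rewrite /ga ler_pdivrMr // ge_min; apply/orP; right; lra.
have [_ [p Bp <-] hp] := sup_adherent ga0 hsG.
rewrite -/s in hp.
exists p => Z sZ Zp.
set BZ := unit_ball Z.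
have BZB : BZ `<=` B by move=> x [_ ?]; split.
have BZp : BZ p by split => //; exact: Bp.2.
set EZ := [set `|g x| | x in BZ].
have hsEZ : has_sup EZ.
  split; first by exists `|g p|, p.
  by exists 1 => _ [x /BZB Bx <-]; exact: gB.
set m := sup EZ.
have ubZ x : BZ x -> `|g x| <= m by move=> Bx; apply: sup_upper_bound => //; exists x.
have mp := ubZ p BZp.
have m1 : m <= 1.
  by apply: ge_sup; [exists `|g p|, p|move=> _ [x /BZB Bx <-]; exact: gB].
have gp1 := ler_norm (g p).
have gpp : 1/4 < g p by lra.
have m0 : 0 < m by lra.
set h := fun x => m^-1 * g x.
have hm x : g x = m * h x by rewrite /h mulrA mulfV ?gt_eqF // mul1r.
have hle x : BZ x -> `|h x| <= 1.
  move=> Bx; rewrite /h normrM gtr0_norm ?invr_gt0 //.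
  by rewrite ler_pdivrMl // mulr1; exact: ubZ.
exists (slice BZ h ga); split; last first.
  move=> x [BZx hx]; split; first exact: BZB.
  have hub : has_ubound (h @` BZ).
    by exists 1 => _ [y BZy <-]; exact: le_trans (ler_norm _) (hle y BZy).
  have hph : h p <= sup (h @` BZ) by apply: ub_le_sup => //; exists p.
  rewrite -/s hm; move: hx hp; rewrite hm.
  set u := h x; set v := h p => hx hp.
  have hvu : v - ga < u by apply: le_lt_trans hx; rewrite lerD2r.
  have e1 : 0 < m * (u - v + ga) by rewrite mulr_gt0 //; lra.
  have e2 : 0 <= (1 - m) * ga by rewrite mulr_ge0 // ?subr_ge0 // ltW.
  nra.
exists h, ga; split => //.
- split.
    move=> a x y Zx Zy; rewrite /h (dg.1 a x y I I) mulrDr mulrCA //.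
  apply: continuous_subspaceT => x.
  have c1 := withinT_cont dg.2; have c2 := @mulrl_continuous R m^-1.
  exact: (continuous_comp (c1 _) (c2 _)).
- set F := [set `|h x| | x in BZ].
  have hsF : has_sup F.
    split; first by exists `|h p|, p.
    by exists 1 => _ [x Bx <-]; exact: hle.
  apply/eqP; rewrite eq_le; apply/andP; split.
    by apply: ge_sup; [exists `|h p|, p|move=> _ [x Bx <-]; exact: hle].
  rewrite leNgt; apply/negP => hlt.
  have eta0 : 0 < m * (1 - sup F) by rewrite mulr_gt0 // subr_gt0.
  have [_ [x BZx <-] hx] := sup_adherent eta0 hsEZ.
  have Fx : `|h x| <= sup F by apply: sup_upper_bound => //; exists x.
  move: hx; rewrite -/m hm normrM (gtr0_norm m0).
  set u := `|h x|.
  rewrite -[X in X - _ < _]mulr1 -mulrBr ltr_pM2l //.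
  have -> : 1 - (1 - sup F) = sup F by rewrite opprB addrC subrK.
  by move=> hu; have := lt_le_trans hu Fx; rewrite ltxx.
Qed.


Lemma small_prod (c t eps : R) : 0 <= c -> 0 < eps -> 0 <= t ->
  t < eps / (2 * (c + 1)) -> c * t < eps / 2.
Proof.
move=> c0 e0 t0 ht.
set k := eps / (2 * (c + 1)) in ht.
have hk : k * (2 * (c + 1)) = eps by rewrite /k divfK // mulf_neq0 // gt_eqF // ltr_wpDl.
have k0 : 0 < k by apply: le_lt_trans ht.
have h1 : c * t <= c * k by rewrite ler_wpM2l // ltW.
nra.
Qed.

Lemma closure_mono (A B : set X) : A `<=` B -> closure A `<=` closure B.
Proof.
move=> AB x /closureN H; apply/closureN => e e0.
by have [d Ad xd] := H e e0; exists d => //; apply: AB.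
Qed.

Section Span.
Variables (T : countType) (e : T -> X).

Definition combo (s : seq (rat * T)) : X := \sum_(q <- s) (ratr q.1 : R) *: e q.2.
Definition Dset : set X := [set combo s | s in [set: seq (rat * T)]].

Lemma Dset_countable : countable Dset.
Proof. exact: sub_countable (card_image_le _ _) (countableP _). Qed.

Lemma D0 : Dset 0.
Proof. by exists [::] => //; rewrite /combo big_nil. Qed.

Lemma DD x y : Dset x -> Dset y -> Dset (x + y).
Proof.
by move=> [s _ <-] [t _ <-]; exists (s ++ t) => //; rewrite /combo big_cat.
Qed.

Lemma Dq (q : rat) x : Dset x -> Dset ((ratr q : R) *: x).
Proof.
move=> [s _ <-]; exists (map (fun p => (q * p.1, p.2)) s) => //.
rewrite /combo big_map scaler_sumr; apply: eq_bigr => p _ /=.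
by rewrite rmorphM scalerA.
Qed.

Lemma De t : Dset (e t).
Proof.
by exists [:: (1, t)] => //; rewrite /combo big_seq1 /= rmorph1 scale1r.
Qed.

Definition Cl := closure Dset.

Lemma cl_add x y : Cl x -> Cl y -> Cl (x + y).
Proof.
move=> /closureN hx /closureN hy; apply/closureN => ep ep0.
have ep2 : 0 < ep / 2 by rewrite divr_gt0.
have [d1 D1 h1] := hx _ ep2; have [d2 D2 h2] := hy _ ep2.
exists (d1 + d2); first exact: DD.
rewrite opprD addrACA; apply: le_lt_trans (ler_normD _ _) _.
by rewrite [ep]splitr ltrD.
Qed.

Lemma cl_scale (a : R) x : Cl x -> Cl (a *: x).
Proof.
move=> /closureN hx; apply/closureN => ep ep0.
have ep2 : 0 < ep / (2 * (`|a| + 1)) by rewrite divr_gt0 // mulr_gt0 // ltr_wpDl.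
have [d D1 h1] := hx _ ep2.
have ep3 : 0 < ep / (2 * (`|d| + 1)) by rewrite divr_gt0 // mulr_gt0 // ltr_wpDl.
have [q] := @rat_in_itvoo R (a - ep / (2 * (`|d| + 1))) (a + ep / (2 * (`|d| + 1))) ltac:(lra).
rewrite in_itv /= => hq.
have hq' : `|a - ratr q| < ep / (2 * (`|d| + 1)) by rewrite ltr_distlC.
exists ((ratr q : R) *: d); first exact: Dq.
have -> : a *: x - (ratr q : R) *: d = a *: (x - d) + (a - ratr q) *: d.
  by rewrite scalerBr scalerBl addrA subrK.
apply: le_lt_trans (ler_normD _ _) _; rewrite !normrZ [ep]splitr.
apply: ltrD.
  by apply: small_prod.
rewrite mulrC; apply: small_prod => //.
Qed.

Lemma Cl_subspace : closed_subspace Cl.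
Proof.
split; last exact: closed_closure.
split; first exact: subset_closure D0.
by move=> a x y hx hy; apply: cl_add => //; apply: cl_scale.
Qed.

Lemma Cl_sep : separable_set Cl.
Proof.
exists Dset; split; [exact: Dset_countable|exact: subset_closure|by []].
Qed.

Lemma Cl_e t : Cl (e t).
Proof. exact: subset_closure (De t). Qed.

End Span.


Unset Implicit Arguments.
Record data := Data { dn : nat; dlam : 'I_dn -> R; dS : 'I_dn -> set X; dpts : 'I_dn -> X }.
Set Implicit Arguments.

Definition good (k : nat) (t : data) : Prop :=
  [/\ forall i, 0 < dlam t i, \sum_(i < dn t) dlam t i = 1,
      (diam (convex_comb_set (dlam t) (dS t)) < ((k.+1)%:R^-1)%:E)%E &
      forall i Z, is_subspace Z -> Z (dpts t i) ->
        exists S', is_slice_of_ball Z S' /\ S' `<=` dS t i].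

Lemma exists_good : BSCSP X -> forall k, exists t, good k t.
Proof.
move=> H k; have [n [lam [S [lam0 lam1 slS dS]]]] := H ((k.+1)%:R^-1) ltac:(by rewrite invr_gt0).
have : forall i, exists p, forall Z, is_subspace Z -> Z p ->
    exists S', is_slice_of_ball Z S' /\ S' `<=` S i.
  by move=> i; have [g [al [dg ng a0 ->]]] := slS i; exact: restrict.
move=> /choice [pts hpts]; by exists (Data n lam S pts); split.
Qed.

Lemma diam_mono (A B : set X) : A `<=` B -> (diam A <= diam B)%E.
Proof.
move=> AB; apply: ereal_sup_le => _ [x Ax [y Ay <-]].
by exists x; [apply: AB|exists y => //; apply: AB].
Qed.

End Aux.
Arguments dn {R X}. Arguments dlam {R X}. Arguments dS {R X}. Arguments dpts {R X}.

Theorem mainTheorem1 (R : realType) (X : completeNormedModType R) :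
  BSCSP X ->
  forall Y : set X, closed_subspace Y -> separable_set Y ->
  exists Z : set X, [/\ closed_subspace Z, separable_set Z, Y `<=` Z & BSCSP_on Z].
Proof.
move=> H Y clY [DY [cDY DYY YDY]].
have /countable_injP [f finj] := cDY.
pose enumY := fun j : nat => xget 0 [set x | DY x /\ f x = j].
have enumYP d : DY d -> enumY (f d) = d.
  move=> Dd; apply: xget_unique => // y [Dy fy].
  by apply: finj => //; rewrite inE.
have /choice [F hF] := exists_good H.
pose pt (k j : nat) : X := oapp (dpts (F k)) 0 (insub j : option 'I_(dn (F k))).
pose e (u : nat + nat * nat) : X :=
  match u with inl j => enumY j | inr (k, j) => pt k j end.
exists (Cl e); split.
- exact: Cl_subspace.
- exact: Cl_sep.
- move=> y /YDY; apply: closure_mono => d Dd.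
  by rewrite -(enumYP d Dd); exact: (De e (inl (f d))).
move=> eps e0.
pose k := Num.Def.trunc (eps^-1).
have hk : ((k.+1)%:R^-1 : R) < eps.
  have h := truncnS_gt (eps^-1); rewrite -/k in h.
  rewrite -[_^-1]mulr1 ltr_pdivrMl // mulrC.
  by rewrite -(ltr_pM2l e0) mulfV ?gt_eqF // in h.
have [lam0 lam1 hdiam hS] := hF k.
set t := F k in lam0 lam1 hdiam hS.
have : forall i : 'I_(dn t), exists S', is_slice_of_ball (Cl e) S' /\ S' `<=` dS t i.
  move=> i; apply: hS; first by case: (Cl_subspace e).
  have -> : dpts t i = e (inr (k, val i)) by rewrite /e /pt valK.
  exact: Cl_e.
move=> /choice [S' hS'].
exists (dn t), (dlam t), S'; split => //.
- by move=> i; exact: (hS' i).1.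
apply: le_lt_trans (diam_mono _) (lt_trans hdiam _); last by rewrite lte_fin.
move=> y [xs [hx ->]]; exists xs; split => // i; exact: (hS' i).2 _ (hx i).
Qed.
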